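(* Let $X$ be a real Banach space whose norm is Fréchet differentiable and let $(S,\mu)$ be a complete, $\sigma$-finite positive measure space. Let $f\in L^1(\mu,X)$ be a smooth point of $L^1(\mu,X)$ such that $Z(f)^c=\{s\in S:f(s)\neq0\}$ is an atom and $f(s)$ is a left symmetric point of $X$ for each $s\in S$. Then $f$ is a left symmetric point of $L^1(\mu,X)$.
   Context: $L^1(\mu,X)$ is the Lebesgue–Bochner space of (classes of a.e. equal) strongly measurable $f:S\to X$ with $\|f\|=\int_S\|f(s)\|\,d\mu(s)<\infty$; $Z(f)=\{s:f(s)=0\}$. In a real normed space $Y$, $x\perp_{BJ}y$ means $\|x+\lambda y\|\ge\|x\|$ for all $\lambda\in\mathbb{R}$; $x$ is a left symmetric point if $x\perp_{BJ}y$ implies $y\perp_{BJ}x$ for all $y\in Y$. A non-zero $x$ is smooth if there is a unique norm-one $F\in Y^*$ with $F(x)=\|x\|$. The norm of $X$ is Fréchet differentiable if for every non-zero $x$ there is $\varphi\in X^*$ with $\lim_{h\to0}\big|\|x+h\|-\|x\|-\varphi(h)\big|/\|h\|=0$. A measurable set $A$ is an atom if $\mu(A)>0$ and every measurable $B\subseteq A$ has $\mu(B)=0$ or $\mu(B)=\mu(A)$. *)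

(* Defs.v *)
From HB Require Import structures.
From mathcomp Require Import all_boot all_order all_algebra.
From mathcomp Require Import all_classical all_reals all_analysis.
Set Implicit Arguments. Unset Strict Implicit. Unset Printing Implicit Defensive.
Import Order.TTheory GRing.Theory Num.Theory.
Import numFieldNormedType.Exports.
Local Open Scope classical_set_scope.
Local Open Scope ring_scope.

Section Defs.
Context {R : realType}.

Definition BJ_orth {V : Type} (N : V -> R) (add : V -> V -> V)
  (scal : R -> V -> V) (x y : V) : Prop :=
  forall l : R, N x <= N (add x (scal l y)).

Definition BJ {X : normedModType R} (x y : X) : Prop :=
  BJ_orth (fun z : X => `|z|) +%R *:%R x y.

Definition left_symmetric {X : normedModType R} (x : X) : Prop :=
  forall y : X, BJ x y -> BJ y x.

Definition frechet_differentiable_norm (X : normedModType R) : Prop :=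
  forall x : X, x != 0 -> differentiable (fun y : X => `|y| : R) x.

Context {d : measure_display} {S : measurableType d}.

Definition simple_fun {X : normedModType R} (phi : S -> X) : Prop :=
  finite_set (range phi) /\ forall x : X, measurable (phi @^-1` [set x]).

Definition strongly_measurable (mu : {measure set S -> \bar R})
  {X : normedModType R} (f : S -> X) : Prop :=
  exists phi : nat -> S -> X, (forall n, simple_fun (phi n)) /\
    {ae mu, forall s, phi n s @[n --> \oo] --> f s}.

Definition L1 (mu : {measure set S -> \bar R}) {X : normedModType R}
  (f : S -> X) : Prop :=
  strongly_measurable mu f /\ (\int[mu]_s (`|f s|)%:E < +oo)%E.

Definition L1norm (mu : {measure set S -> \bar R}) {X : normedModType R}
  (f : S -> X) : R := fine (\int[mu]_s (`|f s|)%:E).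

Definition fadd {X : normedModType R} (f g : S -> X) : S -> X :=
  fun s => f s + g s.
Definition fscal {X : normedModType R} (a : R) (f : S -> X) : S -> X :=
  fun s => a *: f s.

Definition BJ_L1 (mu : {measure set S -> \bar R}) {X : normedModType R}
  (f g : S -> X) : Prop := BJ_orth (L1norm mu) fadd fscal f g.

Definition left_symmetric_L1 (mu : {measure set S -> \bar R})
  {X : normedModType R} (f : S -> X) : Prop :=
  forall g : S -> X, L1 mu g -> BJ_L1 mu f g -> BJ_L1 mu g f.

(* F is a norm-one element of the dual of L^1(mu, X): a linear functional on
   L^1 with operator norm (w.r.t. the L^1 norm) equal to 1.  Bounded
   functionals vanish on null functions, so they are functionals on classes. *)
Definition L1_dual_norm_one (mu : {measure set S -> \bar R})
  {X : normedModType R} (F : (S -> X) -> R) : Prop :=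
  [/\ (forall g h, L1 mu g -> L1 mu h -> F (fadd g h) = F g + F h),
      (forall (a : R) g, L1 mu g -> F (fscal a g) = a * F g),
      (forall g, L1 mu g -> `|F g| <= L1norm mu g) &
      (forall e : R, 0 < e -> exists g, [/\ L1 mu g, L1norm mu g <= 1 &
                                            1 - e < `|F g|])].

(* f is a smooth point of L^1(mu, X): f is non-zero (as a class) and there is
   a unique norm-one F in the dual with F f = ||f|| (functionals being
   identified when they agree on L^1). *)
Definition smooth_L1 (mu : {measure set S -> \bar R}) {X : normedModType R}
  (f : S -> X) : Prop :=
  [/\ L1norm mu f != 0,
      (exists F, L1_dual_norm_one mu F /\ F f = L1norm mu f) &
      (forall F1 F2, L1_dual_norm_one mu F1 -> F1 f = L1norm mu f ->
                     L1_dual_norm_one mu F2 -> F2 f = L1norm mu f ->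
                     forall g, L1 mu g -> F1 g = F2 g)].

Definition is_atom (mu : {measure set S -> \bar R}) (A : set S) : Prop :=
  [/\ measurable A, (0 < mu A)%E &
      forall B, measurable B -> B `<=` A -> mu B = 0%E \/ mu B = mu A].

Definition complete_measure (mu : {measure set S -> \bar R}) : Prop :=
  forall N : set S, mu.-negligible N -> measurable N.

End Defs.

(* Main.v *)
Require Import Defs.
From HB Require Import structures.
From mathcomp Require Import all_boot all_order all_algebra.
From mathcomp Require Import all_classical all_reals all_analysis.
From mathcomp Require Import measurable_realfun.
From mathcomp Require Import lra.
Import Order.TTheory GRing.Theory Num.Theory.
Import numFieldNormedType.Exports.
Local Open Scope classical_set_scope.
Local Open Scope ring_scope.
Set Implicit Arguments. Unset Strict Implicit. Unset Printing Implicit Defensive.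

Section Aux.
Context {R : realType} {X : normedModType R} {d : measure_display} {S : measurableType d}.
Variable mu : {measure set S -> \bar R}.

Lemma simple_preimage (phi : S -> X) : simple_fun phi ->
  forall P : set X, measurable (phi @^-1` P).
Proof.
move=> [fin mpt] P.
have /countable_injP[f injf] : countable (range phi `&` P).
  exact/finite_set_countable/finite_setIl.
have -> : phi @^-1` P = \bigcup_k (phi @^-1` ((range phi `&` P) `&` f @^-1` [set k])).
  apply/seteqP; split.
    by move=> s Ps; exists (f (phi s)) => //; split => //; split => //; exists s.
  by move=> s [k _ [[_ Ps] _]].
apply: bigcupT_measurable => k.
have [->|/set0P[z [Az fz]]] := eqVneq ((range phi `&` P) `&` f @^-1` [set k]) set0.
  by rewrite preimage_set0.
suff -> : (range phi `&` P) `&` f @^-1` [set k] = [set z] by [].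
apply/seteqP; split => [w [Aw fw]|w ->]; last by split.
apply: injf; rewrite ?inE //; by rewrite fw fz.
Qed.

Lemma simple_comp {Y : normedModType R} (phi : S -> X) (k : X -> Y) :
  simple_fun phi -> simple_fun (k \o phi).
Proof.
move=> sphi; split.
  apply: (sub_finite_set _ (finite_image k sphi.1)).
  by move=> _ [s _ <-]; exists (phi s) => //; exists s.
by move=> w; rewrite comp_preimage; exact: simple_preimage.
Qed.

Definition res (C : set S) (u : S -> X) : S -> X :=
  fun s => if s \in C then u s else 0.

Lemma simple_res (phi : S -> X) C : measurable C ->
  simple_fun phi -> simple_fun (res C phi).
Proof.
move=> mC [fin mpt]; split.
  have fU : finite_set (range phi `|` [set (0:X)]) by rewrite finite_setU; split => //; exact: finite_set1.
  apply: (sub_finite_set _ fU).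
  move=> _ [s _ <-]; rewrite /res; case: ifP => _; [left; by exists s|by right].
move=> w.
have -> : res C phi @^-1` [set w] =
   (C `&` phi @^-1` [set w]) `|` (~` C `&` [set _ | (0:X) = w]).
  apply/seteqP; split => s; rewrite /res /=.
    by case: ifPn => [/set_mem Cs ->|/negP Cs <-]; [left|right; split => //; move=> /mem_set].
  by case=> [[Cs <-]|[Cs <-]]; [rewrite mem_set|case: ifPn => // /set_mem].
apply: measurableU; first exact: measurableI.
apply: measurableI; first exact: measurableC.
have [w0|w0] := pselect ((0:X) = w).
  by rewrite (_ : [set _ | _] = setT) //; apply/seteqP; split.
by rewrite (_ : [set _ | _] = set0) //; apply/seteqP; split.
Qed.

Lemma sm_comp {Y : normedModType R} (u : S -> X) (k : X -> Y) :
  continuous k -> strongly_measurable mu u -> strongly_measurable mu (k \o u).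
Proof.
move=> ck [phi [sphi ae]]; exists (fun n => k \o phi n); split.
  by move=> n; exact: simple_comp.
apply: filterS ae => s cv /=.
exact: (continuous_cvg _ (ck (u s))).
Qed.

Lemma sm_res (u : S -> X) C : measurable C ->
  strongly_measurable mu u -> strongly_measurable mu (res C u).
Proof.
move=> mC [phi [sphi ae]]; exists (fun n => res C (phi n)); split.
  by move=> n; exact: simple_res.
apply: filterS ae => s cv; rewrite /res; case: ifP => _ //.
exact: cvg_cst.
Qed.

End Aux.

Section Aux2.
Context {R : realType} {d : measure_display} {S : measurableType d}.
Variable mu : {measure set S -> \bar R}.

Lemma sm_measurable (v : S -> R) : complete_measure mu ->
  strongly_measurable mu v -> measurable_fun setT v.
Proof.
move=> cmu [phi [sphi [M [mM M0 sub]]]].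
have mv : measurable_fun (~` M) v.
  apply: (@measurable_fun_cvg _ _ _ _ phi) => [n|s Ms].
    by move=> _ Y mY; apply: measurableI; [exact: measurableC|exact: simple_preimage].
  by apply: contrapT => nc; exact: Ms (sub s nc).
move=> _ Y mY; rewrite setTI.
have -> : v @^-1` Y = (~` M `&` v @^-1` Y) `|` (M `&` v @^-1` Y).
  by rewrite -setIUl setvU setTI.
apply: measurableU; first exact: (mv (measurableC mM) _ mY).
by apply: cmu; exists M; split => //; exact: subIsetl.
Qed.

End Aux2.

Section Main.
Context {R : realType} {X : normedModType R} {d : measure_display} {S : measurableType d}.
Variable mu : {measure set S -> \bar R}.
Hypothesis cmu : complete_measure mu.

Lemma lip_cont (k : X -> R) : (forall z w, `|k z - k w| <= `|z - w|) -> continuous k.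
Proof.
move=> kl z; apply/cvgrPdist_lt => e e0.
near=> w; apply: (le_lt_trans (kl _ _)); near: w.
exact: (@cvgr_dist_lt _ _ _ _ _ id z cvg_id _ e0).
Unshelve. all: by end_near.
Qed.

Lemma sm_norm (u : S -> X) : strongly_measurable mu u ->
  measurable_fun setT (fun s => `|u s|).
Proof. by move=> su; apply: (sm_measurable cmu); exact: (sm_comp norm_continuous su). Qed.

Lemma L1_int (u : S -> X) : L1 mu u ->
  mu.-integrable setT (EFin \o (fun s => `|u s|)).
Proof.
move=> [su fu]; apply/integrableP; split.
  by apply/measurable_EFinP; exact: sm_norm.
by under eq_integral do rewrite /= normr_id.
Qed.

Lemma L1norm_ge0 (u : S -> X) : 0 <= L1norm mu u.
Proof. by apply: Rintegral_ge0 => s _. Qed.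

Lemma res_norm (u : S -> X) C s : `|res C u s| = ((fun s => `|u s|) \_ C) s.
Proof. by rewrite /res patchE; case: ifP => _ //; rewrite normr0. Qed.

Lemma L1_res (u : S -> X) C : measurable C -> L1 mu u -> L1 mu (res C u).
Proof.
move=> mC [su fu]; split; first exact: sm_res.
apply: le_lt_trans fu; apply: ge0_le_integral => //.
- by apply/measurable_EFinP; apply: sm_norm; exact: sm_res.
- by apply/measurable_EFinP; apply: sm_norm.
- by move=> s _; rewrite lee_fin /res; case: ifP => _; rewrite ?normr0.
Qed.

Lemma L1norm_res (u : S -> X) C : L1norm mu (res C u) = Rintegral mu C (fun s => `|u s|).
Proof.
rewrite Rintegral_mkcond /L1norm; congr fine; apply: eq_integral => s _.
by rewrite res_norm.
Qed.

Lemma L1norm_split (u : S -> X) C : measurable C -> L1 mu u ->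
  L1norm mu u = L1norm mu (res C u) + L1norm mu (res (~` C) u).
Proof.
move=> mC Lu; rewrite !L1norm_res -Rintegral_setU ?setUv //.
- exact: measurableC.
- exact: L1_int.
- by rewrite disj_set2E setICr.
Qed.


Lemma simple_cst (z : X) : simple_fun (cst z : S -> X).
Proof.
split.
  apply: (sub_finite_set _ (finite_set1 z)); by move=> _ [s _ <-].
move=> w; have [<-|wz] := pselect (z = w).
  by rewrite (_ : _ @^-1` _ = setT) //; apply/seteqP; split.
by rewrite (_ : _ @^-1` _ = set0) //; apply/seteqP; split.
Qed.

Lemma sm_simple (phi : S -> X) : simple_fun phi -> strongly_measurable mu phi.
Proof.
move=> sp; exists (fun _ => phi); split => //.
apply: aeW => s /=.
exact: cvg_cst. Qed.

Lemma L1norm_cst_res (z : X) C : measurable C ->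
  L1norm mu (res C (cst z)) = `|z| * fine (mu C).
Proof. by move=> mC; rewrite L1norm_res (@Rintegral_cst _ _ _ mu C mC `|z|). Qed.

Lemma L1_cst_res (z : X) C : measurable C -> (mu C < +oo)%E -> L1 mu (res C (cst z)).
Proof.
move=> mC mCoo; split; first by apply: sm_simple; apply: simple_res => //; exact: simple_cst.
have E : (fun s => (`|res C (cst z) s|)%:E) = (fun s => (`|z|)%:E) \_ C.
  by apply/funext => s; rewrite patchE /res; case: ifP => _ //=; rewrite normr0.
rewrite E -integral_mkcond integral_cst //.
by apply: lte_mul_pinfty.
Qed.

Lemma L1norm_null (u : S -> X) N : measurable N -> mu N = 0%E -> L1 mu u ->
  L1norm mu (res N u) = 0.
Proof.
move=> mN N0 [su _]; rewrite L1norm_res /Rintegral null_set_integral //.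
apply/measurable_EFinP; apply: (measurable_funS (E := setT)) => //.
exact: sm_norm.
Qed.


Lemma atom_fin A : sigma_finite setT mu -> is_atom mu A -> (mu A < +oo)%E.
Proof.
move=> [F FT mF] [mA A0 atA].
have [[i Hi]|H] := pselect (exists i, mu (A `&` F i) != 0%E).
  have mAF : measurable (A `&` F i) by apply: measurableI => //; exact: (mF i).1.
  have [E|<-] := atA (A `&` F i) mAF (@subIsetl _ _ _).
    by rewrite E eqxx in Hi.
  exact: le_lt_trans (measureIr _ mA (mF i).1) (mF i).2.
have : mu.-negligible A.
  apply: (negligibleS (A := \bigcup_i (A `&` F i))).
    by move=> s As; have : setT s by []; rewrite FT => -[i _ Fi]; exists i.
  apply: negligible_bigcup => i; apply/negligibleP.
    by apply: measurableI => //; exact: (mF i).1.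
  by apply: contrapT => ne; apply: H; exists i; apply/eqP.
move/(measure_negligible mA) => A00; by rewrite A00 ltxx in A0.
Qed.

Lemma simple_atom (phi : S -> X) A : simple_fun phi -> is_atom mu A -> (mu A < +oo)%E ->
  exists c N, [/\ measurable N, mu N = 0%E & forall s, A s -> ~ N s -> phi s = c].
Proof.
move=> sphi [mA A0 atA] Afin.
have [[z Hz]|H] := pselect (exists z, mu (A `&` phi @^-1` [set z]) = mu A).
  exists z, (A `\` phi @^-1` [set z]); split.
  - by apply: measurableD => //; exact: simple_preimage.
  - rewrite measureD //; last exact: simple_preimage.
    transitivity (mu A - mu A)%E; first by congr (_ - _)%E. by rewrite subee // ge0_fin_numE // measure_ge0.
  - by move=> s As nN; apply: contrapT => ne; apply: nN; split.
exfalso.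
have /countable_injP[f injf] : countable (range phi).
  exact/finite_set_countable/(sphi.1).
have N0 : forall k, mu.-negligible (A `&` phi @^-1` (range phi `&` f @^-1` [set k])).
  move=> k; set B := A `&` _.
  have mB : measurable B by apply: measurableI => //; exact: simple_preimage.
  apply/negligibleP => //.
  have [//|BA] := atA B mB (@subIsetl _ _ _).
  exfalso.
  have [B0|/set0P[s Bs]] := eqVneq B set0.
    by move: BA; rewrite B0 measure0 => BA; rewrite -BA ltxx in A0.
  apply: H; exists (phi s); apply/eqP; rewrite eq_le; apply/andP; split.
    have mP : measurable (A `&` phi @^-1` [set phi s]) by apply: measurableI => //; exact: simple_preimage.
    by rewrite le_measure ?inE //; exact: subIsetl.
  have mP : measurable (A `&` phi @^-1` [set phi s]) by apply: measurableI => //; exact: simple_preimage.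
  rewrite -BA le_measure ?inE //.
  move=> t [At [rt ft]]; split => //=.
  case: Bs => _ [rs fs].
  by apply: injf; rewrite ?inE // ft fs.
have : mu.-negligible A.
  apply: negligibleS (negligible_bigcup N0).
  move=> s As; exists (f (phi s)) => //; split => //; split => //; by exists s.
move/(measure_negligible mA) => A00; by rewrite A00 ltxx in A0.
Qed.

Lemma sm_atom (u : S -> X) A : strongly_measurable mu u -> is_atom mu A -> (mu A < +oo)%E ->
  exists c N, [/\ measurable N, mu N = 0%E & forall s, A s -> ~ N s -> u s = c].
Proof.
move=> [phi [sphi [M [mM M0 subM]]]] atA Afin.
have H : forall n, exists p : X * set S,
    [/\ measurable p.2, mu p.2 = 0%E & forall s, A s -> ~ p.2 s -> phi n s = p.1].
  by move=> n; have [c [N [? ? ?]]] := simple_atom (sphi n) atA Afin; exists (c, N).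
have [p Hp] := choice H.
set N := M `|` \bigcup_n (p n).2.
have mN : measurable N.
  by apply: measurableU => //; apply: bigcupT_measurable => n; have [] := Hp n.
have N0 : mu N = 0%E.
  apply: (measure_negligible mN); apply: negligibleU; first exact/negligibleP.
  by apply: negligible_bigcup => n; have [? ? _] := Hp n; exact/negligibleP.
case: (atA) => mA A0 _.
have [s0 [As0 Ns0]] : exists s, A s /\ ~ N s.
  apply: contrapT => nex.
  have : (mu A <= mu N)%E.
    rewrite le_measure ?inE // => s As; apply: contrapT => Ns; apply: nex; by exists s.
  by rewrite N0 leNgt A0.
exists (u s0), N; split => // s As Ns.
have cvs : phi n s @[n --> \oo] --> u s.
  by apply: contrapT => nc; apply: Ns; left; exact: subM.
have cvs0 : phi n s0 @[n --> \oo] --> u s0.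
  by apply: contrapT => nc; apply: Ns0; left; exact: subM.
have e : (fun n => phi n s) = (fun n => phi n s0).
  apply/funext => n; have [_ _ h] := Hp n.
  by rewrite !h // => Pn; [apply: Ns0|apply: Ns]; right; exists n.
rewrite e in cvs.
exact: (cvg_unique _ cvs cvs0).
Qed.

End Main.

Section Main2.
Context {R : realType} {X : normedModType R} {d : measure_display} {S : measurableType d}.
Variable mu : {measure set S -> \bar R}.
Hypothesis cmu : complete_measure mu.
Variables (f : S -> X) (A : set S) (F1 : (S -> X) -> R).
Hypotheses (Lf : L1 mu f) (fA : forall s, ~ A s -> f s = 0).
Hypotheses (mA : measurable A) (A0 : (0 < mu A)%E) (Afin : (mu A < +oo)%E).
Hypotheses (F1d : L1_dual_norm_one mu F1) (F1f : F1 f = L1norm mu f).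

Lemma F1_null (u : S -> X) N : measurable N -> mu N = 0%E -> L1 mu u ->
  F1 u = F1 (res (~` N) u).
Proof.
move=> mN N0 Lu; case: F1d => Fadd _ Fle _.
have -> : u = fadd (res N u) (res (~` N) u).
  apply/funext => s; rewrite /fadd /res in_setC.
  by case: (s \in N) => /=; rewrite ?add0r ?addr0.
have L1N := L1_res cmu mN Lu; have L1C := L1_res cmu (measurableC mN) Lu.
rewrite Fadd //.
have : `|F1 (res N u)| <= 0 by rewrite -(L1norm_null cmu mN N0 Lu); exact: Fle.
rewrite normr_le0 => /eqP ->; rewrite add0r; congr F1.
apply/funext => s; rewrite /fadd /res !in_setC.
by case: (s \in N) => /=; rewrite ?add0r ?addr0.
Qed.

Definition m := fine (mu A).
Lemma m_gt0 : 0 < m. Proof. by apply: fine_gt0; rewrite A0 Afin. Qed.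

Definition psi (z : X) := F1 (res A (cst z)) / m.

Lemma psiD z w : psi (z + w) = psi z + psi w.
Proof.
case: F1d => Fadd _ _ _; rewrite /psi -mulrDl; congr (_ / _).
rewrite -Fadd; try exact: L1_cst_res.
congr F1; apply/funext => s; rewrite /fadd /res.
by case: (s \in A); rewrite ?addr0.
Qed.

Lemma psiZ a z : psi (a *: z) = a * psi z.
Proof.
case: F1d => _ Fscal _ _; rewrite /psi mulrA -Fscal; last exact: L1_cst_res.
congr (F1 _ / _); apply/funext => s; rewrite /fscal /res.
by case: (s \in A); rewrite ?scaler0.
Qed.

Lemma psi_le z : `|psi z| <= `|z|.
Proof.
case: F1d => _ _ Fle _.
rewrite /psi normrM normfV (gtr0_norm m_gt0) ler_pdivrMr ?m_gt0 //.
by have := Fle _ (L1_cst_res z mA Afin); rewrite L1norm_cst_res.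
Qed.

Lemma psi_lip z w : `|psi z - psi w| <= `|z - w|.
Proof.
have -> : psi z = psi (z - w) + psi w by rewrite -psiD subrK.
by rewrite addrK; exact: psi_le.
Qed.

Lemma psi0 : psi 0 = 0.
Proof. by rewrite -(scale0r (0:X)) psiZ mul0r. Qed.

Lemma psi_int (h : S -> X) B : L1 mu h -> measurable B ->
  mu.-integrable B (EFin \o (fun s => psi (h s))).
Proof.
move=> Lh mB.
apply: (@le_integrable _ _ _ mu B mB _ (EFin \o (fun s => `|h s|))).
- apply/measurable_EFinP; apply: (measurable_funS (E := setT)) => //.
  apply: (sm_measurable cmu); apply: (sm_comp (k := psi)) (Lh.1).
  exact: lip_cont psi_lip.
- by move=> s _ /=; rewrite lee_fin normr_id; exact: psi_le.
- by apply: (integrableS (E := setT)) => //; exact: L1_int.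
Qed.


Lemma L1_scal a (u : S -> X) : L1 mu u -> L1 mu (fscal a u).
Proof.
move=> Lu; split.
  apply: (sm_comp (k := fun x => a *: x)) Lu.1; exact: scaler_continuous.
have -> : (fun s => (`|fscal a u s|)%:E) = (fun s => (`|a|)%:E * (`|u s|)%:E)%E.
  by apply/funext => s; rewrite /fscal normrZ EFinM.
rewrite (integralZl measurableT (L1_int cmu Lu)).
by apply: lte_mul_pinfty => //; exact: Lu.2.
Qed.

Lemma L1norm_scal a (u : S -> X) : L1 mu u -> L1norm mu (fscal a u) = `|a| * L1norm mu u.
Proof.
move=> Lu; have := RintegralZl `|a| measurableT (L1_int cmu Lu).
rewrite /Rintegral /L1norm => <-; congr fine; apply: eq_integral => s _.
by rewrite /fscal normrZ.
Qed.

Lemma klip_int (k : X -> R) (h : S -> X) B : L1 mu h -> measurable B ->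
  (forall z w, `|k z - k w| <= `|z - w|) -> (forall z, `|k z| <= `|z|) ->
  mu.-integrable B (EFin \o (fun s => k (h s))).
Proof.
move=> Lh mB kl kb.
apply: (@le_integrable _ _ _ mu B mB _ (EFin \o (fun s => `|h s|))).
- apply/measurable_EFinP; apply: (measurable_funS (E := setT)) => //.
  apply: (sm_measurable cmu); apply: (sm_comp (k := k)) (Lh.1).
  exact: lip_cont kl.
- by move=> s _ /=; rewrite lee_fin normr_id; exact: kb.
- by apply: (integrableS (E := setT)) => //; exact: L1_int.
Qed.

Lemma psi_int_abs (h : S -> X) B : L1 mu h -> measurable B ->
  mu.-integrable B (EFin \o (fun s => `|psi (h s)|)).
Proof.
move=> Lh mB; apply: (klip_int (k := fun z => `|psi z|)) => //.
  by move=> z w; apply: le_trans (ler_dist_dist _ _) (psi_lip _ _).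
by move=> z; rewrite normr_id; exact: psi_le.
Qed.

Definition Fe (B : set S) (e : R) (h : S -> X) :=
  F1 (res (~` B) h) + e * Rintegral mu B (fun s => psi (h s)).

Hypothesis fnz : L1norm mu f != 0.

Lemma Fe_f B e : measurable B -> B `<=` ~` A -> Fe B e f = L1norm mu f.
Proof.
move=> mB BA; rewrite /Fe.
have -> : res (~` B) f = f.
  apply/funext => s; rewrite /res in_setC.
  by case: (boolP (s \in B)) => //= /set_mem Bs; rewrite fA //; exact: BA.
rewrite (@eq_Rintegral _ _ _ mu B (fun _ => 0)); last first.
  by move=> s /set_mem Bs; rewrite fA ?psi0 //; exact: BA.
by rewrite (@Rintegral_cst _ _ _ mu B mB 0) mul0r mulr0 addr0.
Qed.


Lemma FeD B e g h : measurable B -> L1 mu g -> L1 mu h ->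
  Fe B e (fadd g h) = Fe B e g + Fe B e h.
Proof.
move=> mB Lg Lh; case: F1d => Fadd _ _ _; rewrite /Fe.
have mBC : measurable (~` B) := measurableC mB.
have -> : res (~` B) (fadd g h) = fadd (res (~` B) g) (res (~` B) h).
  by apply/funext => s; rewrite /fadd /res; case: ifP; rewrite ?addr0.
rewrite Fadd; try exact: L1_res.
have -> : Rintegral mu B (fun s => psi (fadd g h s)) =
    Rintegral mu B (fun s => psi (g s)) + Rintegral mu B (fun s => psi (h s)).
  rewrite -RintegralD //; [|exact: psi_int|exact: psi_int].
  by apply: eq_Rintegral => s _; exact: psiD.
by rewrite mulrDr addrACA.
Qed.

Lemma FeZ B e a g : measurable B -> L1 mu g ->
  Fe B e (fscal a g) = a * Fe B e g.
Proof.
move=> mB Lg; case: F1d => _ Fscal _ _; rewrite /Fe.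
have mBC : measurable (~` B) := measurableC mB.
have -> : res (~` B) (fscal a g) = fscal a (res (~` B) g).
  by apply/funext => s; rewrite /fscal /res; case: ifP; rewrite ?scaler0.
rewrite Fscal; last exact: L1_res.
have -> : Rintegral mu B (fun s => psi (fscal a g s)) =
    a * Rintegral mu B (fun s => psi (g s)).
  rewrite -RintegralZl //; last exact: psi_int.
  by apply: eq_Rintegral => s _; exact: psiZ.
by rewrite mulrDr mulrCA.
Qed.

Lemma Fe_dual B e : measurable B -> B `<=` ~` A -> `|e| <= 1 ->
  L1_dual_norm_one mu (Fe B e).
Proof.
move=> mB BA e1; case: F1d => _ _ Fle _.
have mBC : measurable (~` B) := measurableC mB.
split.
- by move=> g h Lg Lh; exact: FeD.
- by move=> a g Lg; exact: FeZ.
- move=> g Lg; rewrite /Fe (L1norm_split cmu mB Lg) [X in _ <= X]addrC.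
  apply: le_trans (ler_normD _ _) _; apply: lerD; first by apply: Fle; exact: L1_res.
  rewrite normrM; apply: le_trans (ler_pM (normr_ge0 _) (normr_ge0 _) e1 (lexx _)) _.
  rewrite mul1r.
  apply: le_trans (le_normr_Rintegral mB (psi_int Lg mB)) _.
  rewrite L1norm_res; apply: le_Rintegral => //; first exact: psi_int_abs.
    by apply: (integrableS (E := setT)) => //; exact: L1_int.
  by move=> s _; exact: psi_le.
- move=> e0 e0pos; exists (fscal (L1norm mu f)^-1 f); split.
  + exact: L1_scal.
  + by rewrite L1norm_scal // normfV ger0_norm ?L1norm_ge0 // mulVf.
  + rewrite FeZ // Fe_f // mulVf // normr1.
    by rewrite ltrBlDr ltrDl.
Qed.


Lemma psi_c c N : measurable N -> mu N = 0%E ->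
  (forall s, A s -> ~ N s -> f s = c) -> psi c = L1norm mu f / m.
Proof.
move=> mN N0 hc; rewrite /psi -F1f; congr (_ / _).
rewrite (F1_null mN N0 Lf) (F1_null mN N0 (L1_cst_res c mA Afin)); congr F1.
apply/funext => s; rewrite /res in_setC.
case: ifPn => // sN; have Ns : ~ N s by move=> /mem_set; exact/negP.
case: (pselect (A s)) => As; first by rewrite mem_set // hc.
by rewrite memNset // fA.
Qed.

Hypothesis atA : is_atom mu A.
Hypothesis huniq : forall F2, L1_dual_norm_one mu F2 -> F2 f = L1norm mu f ->
  forall F3, L1_dual_norm_one mu F3 -> F3 f = L1norm mu f ->
  forall g, L1 mu g -> F2 g = F3 g.

Lemma null_outside B : measurable B -> (mu B < +oo)%E -> B `<=` ~` A -> mu B = 0%E.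
Proof.
move=> mB Bfin BA.
have [c [N [mN N0 hc]]] := sm_atom Lf.1 atA Afin.
have pc := psi_c mN N0 hc.
have pc0 : psi c != 0 by rewrite pc mulf_neq0 // invr_neq0 // gt_eqF // m_gt0.
have L1g := L1_cst_res c mB Bfin.
have e1 : `|1 : R| <= 1 by rewrite normr1.
have e2 : `|-1 : R| <= 1 by rewrite normrN1.
have := huniq (Fe_dual mB BA e1) (Fe_f _ mB BA) (Fe_dual mB BA e2) (Fe_f _ mB BA) L1g.
rewrite /Fe => /addrI.
have -> : Rintegral mu B (fun s => psi (res B (cst c) s)) = psi c * fine (mu B).
  rewrite (@eq_Rintegral _ _ _ mu B (fun _ => psi c)); last by move=> s sB; rewrite /res sB.
  by rewrite (@Rintegral_cst _ _ _ mu B mB (psi c)).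
move=> E; have : psi c * fine (mu B) = 0 by lra.
move/eqP; rewrite mulf_eq0 (negbTE pc0) /= fine_eq0 ?ge0_fin_numE ?measure_ge0 //.
by move/eqP.
Qed.

End Main2.

Section Final.
Context {R : realType} {X : normedModType R} {d : measure_display} {S : measurableType d}.
Variable mu : {measure set S -> \bar R}.
Hypothesis cmu : complete_measure mu.

Lemma meas_ae (v : S -> R) M : measurable M -> mu M = 0%E ->
  measurable_fun (~` M) v -> measurable_fun setT v.
Proof.
move=> mM M0 mv _ Y mY; rewrite setTI.
have -> : v @^-1` Y = (~` M `&` v @^-1` Y) `|` (M `&` v @^-1` Y).
  by rewrite -setIUl setvU setTI.
apply: measurableU; first exact: (mv (measurableC mM) _ mY).
by apply: cmu; exists M; split => //; exact: subIsetl.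
Qed.

Lemma const_norm (v : S -> X) (c : X) N : measurable N -> mu N = 0%E ->
  (mu setT < +oo)%E ->
  (forall s, ~ N s -> v s = c) -> L1norm mu v = `|c| * fine (mu setT).
Proof.
move=> mN N0 Tfin hv.
have mv : measurable_fun setT (fun s => `|v s|).
  apply: (meas_ae mN N0); apply: (@eq_measurable_fun _ _ _ _ (~` N) (cst `|c|)).
    by move=> s /set_mem Ns; rewrite hv.
  exact: measurable_cst.
rewrite /L1norm (ae_eq_integral (cst (`|c|)%:E)) //.
- rewrite integral_cst // fineM //; last by rewrite ge0_fin_numE // measure_ge0.
- exact/measurable_EFinP.
- exists N; split => // s /= /not_implyP [_ H]; apply: contrapT => Ns.
  by apply: H; rewrite hv.
Qed.

End Final.

Theorem theorem3p9 (R : realType) (X : completeNormedModType R)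
  (d : measure_display) (S : measurableType d)
  (mu : {measure set S -> \bar R}) (f : S -> X) :
  frechet_differentiable_norm X ->
  complete_measure mu ->
  sigma_finite setT mu ->
  L1 mu f ->
  smooth_L1 mu f ->
  is_atom mu [set s | f s != 0] ->
  (forall s : S, left_symmetric (f s)) ->
  left_symmetric_L1 mu f.
Proof.
move=> _ cmu sf Lf [fnz [F1 [F1d F1f]] uniq] atA lsym.
set A := [set s | f s != 0] in atA *.
have fA : forall s, ~ A s -> f s = 0.
  by move=> s; rewrite /A /= => /negP; rewrite negbK => /eqP.
case: (atA) => mA A0 _.
have Afin := atom_fin sf atA.
have huniq : forall F2, L1_dual_norm_one mu F2 -> F2 f = L1norm mu f ->
  forall F3, L1_dual_norm_one mu F3 -> F3 f = L1norm mu f ->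
  forall g, L1 mu g -> F2 g = F3 g.
  by move=> F2 d2 e2 F3 d3 e3; exact: uniq d2 e2 d3 e3.
have nout := null_outside cmu Lf fA mA A0 Afin F1d F1f fnz atA huniq.
have nullC : mu (~` A) = 0%E.
  case: sf => F FT mF.
  have : mu.-negligible (~` A).
    apply: (negligibleS (A := \bigcup_i (~` A `&` F i))).
      by move=> s nAs; have : setT s by []; rewrite FT => -[i _ Fi]; exists i.
    apply: negligible_bigcup => i; apply/negligibleP.
      by apply: measurableI; [exact: measurableC|exact: (mF i).1].
    apply: nout; first by apply: measurableI; [exact: measurableC|exact: (mF i).1].
      exact: le_lt_trans (measureIr _ (measurableC mA) (mF i).1) (mF i).2.
    exact: subIsetl.
  exact: measure_negligible (measurableC mA).
have muT : mu setT = mu A.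
  rewrite -(setUv A) measureU //; [|exact: measurableC|exact: setICr].
  by transitivity (mu A + 0)%E; [congr (_ + _)%E|exact: adde0].
have Tfin : (mu setT < +oo)%E by rewrite muT.
have mpos : 0 < fine (mu setT) by apply: fine_gt0; rewrite muT A0 Afin.
have [x [Nf [mNf Nf0 hx]]] := sm_atom Lf.1 atA Afin.
move=> g Lg BJfg l.
have [y [Ng [mNg Ng0 hy]]] := sm_atom Lg.1 atA Afin.
set N := ~` A `|` (Nf `|` Ng).
have mN : measurable N by apply: measurableU; [exact: measurableC|exact: measurableU].
have N0 : mu N = 0%E.
  apply: (measure_negligible mN); apply: negligibleU; first by apply/negligibleP => //; exact: measurableC.
  by apply: negligibleU; exact/negligibleP.
have fx s : ~ N s -> f s = x.
  move=> Ns; apply: hx => [|Nfs]; first by apply: contrapT => nA; apply: Ns; left.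
  by apply: Ns; right; left.
have gy s : ~ N s -> g s = y.
  move=> Ns; apply: hy => [|Ngs]; first by apply: contrapT => nA; apply: Ns; left.
  by apply: Ns; right; right.
have [s0 Ns0] : exists s, ~ N s.
  apply: contrapT => nex.
  have : (mu setT <= mu N)%E by rewrite le_measure ?inE // => s _; apply: contrapT => Ns; apply: nex; exists s.
  by rewrite N0 muT leNgt A0.
have BJxy : BJ x y.
  move=> k; have := BJfg k.
  rewrite (const_norm cmu mN N0 Tfin fx) (const_norm cmu mN N0 Tfin (c := x + k *: y)); last first.
    by move=> s Ns; rewrite /fadd /fscal fx // gy.
  by rewrite ler_pM2r.
have := lsym s0; rewrite fx // => /(_ y BJxy) BJyx.
rewrite (const_norm cmu mN N0 Tfin gy) (const_norm cmu mN N0 Tfin (c := y + l *: x)); last first.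
  by move=> s Ns; rewrite /fadd /fscal gy // fx.
by rewrite ler_pM2r //; exact: BJyx.
Qed.
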